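(* Let $s\ge1$ be a fixed integer, let $K_n,P_n$ be positive integers with $s\le K_n\le P_n$ and $P_n=\Omega(n)$, and let $q_n$ be the edge probability of $G_s(n,K_n,P_n)$, i.e., the probability that two given vertices share at least $s$ items. (a) If there is a sequence $\gamma_n$ with $|\gamma_n|=O(\ln\ln n)$ and $\frac{1}{s!}\cdot\frac{K_n^{2s}}{P_n^{s}}=\frac{\ln n+\gamma_n}{n}$, then $q_n\sim\frac{1}{s!}\cdot\frac{K_n^{2s}}{P_n^{s}}$ and $\big|q_n-\frac{1}{s!}\cdot\frac{K_n^{2s}}{P_n^{s}}\big|=o\big(\frac1n\big)$. (b) If there is a sequence $\gamma_n$ with $|\gamma_n|=O(\ln\ln n)$ and $q_n=\frac{\ln n+\gamma_n}{n}$, then $q_n\sim\frac{1}{s!}\cdot\frac{K_n^{2s}}{P_n^{s}}$ and $\big|q_n-\frac{1}{s!}\cdot\frac{K_n^{2s}}{P_n^{s}}\big|=o\big(\frac1n\big)$.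
   Context: The uniform random $s$-intersection graph $G_s(n,K_n,P_n)$ has $n$ vertices; each vertex independently selects a set of $K_n$ distinct items uniformly at random from a pool of $P_n$ distinct items, and two vertices are adjacent iff their item sets share at least $s$ items. $f_n\sim g_n$ means $f_n/g_n\to1$ as $n\to\infty$. *)

(* Defs.v *)
From mathcomp Require Import all_boot.
From Stdlib Require Import Reals.

Set Implicit Arguments.
Unset Strict Implicit.
Unset Printing Implicit Defensive.

Definition overlap_pairs (s K P : nat) : nat :=
  #|[set AB : {set 'I_P} * {set 'I_P} |
      [&& #|AB.1| == K, #|AB.2| == K & s <= #|AB.1 :&: AB.2| ] ]|.

Open Scope R_scope.

(* Edge probability q of G_s(n,K,P): two vertices independently pick uniform
   K-subsets of a pool of P items; probability that they share >= s items. *)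
Definition edge_prob (s K P : nat) : R :=
  INR (overlap_pairs s K P) / (INR ('C(P, K)) ^ 2).

Definition approx_prob (s K P : nat) : R :=
  / INR (s`!) * (INR K ^ (2 * s) / INR P ^ s).

Definition asymp_eq (f g : nat -> R) : Prop :=
  Un_cv (fun n => f n / g n) 1.

Definition little_o_inv_n (f : nat -> R) : Prop :=
  Un_cv (fun n => INR n * Rabs (f n)) 0.

Definition bigO_lnln (g : nat -> R) : Prop :=
  exists C N, forall n : nat, (N <= n)%nat -> Rabs (g n) <= C * ln (ln (INR n)).

Definition bigOmega_n (P : nat -> nat) : Prop :=
  exists c, 0 < c /\ exists N, forall n : nat, (N <= n)%nat -> c * INR n <= INR (P n).

(* Main.v *)
Require Import Defs.
From Stdlib Require Import Arith Reals Lra Lia Psatz.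
From mathcomp Require Import all_boot zify.
Set Implicit Arguments.
Unset Strict Implicit.
Unset Printing Implicit Defensive.

Local Open Scope nat_scope.

Lemma card_split P (A : {set 'I_P}) m u : u <= m ->
  #|[set B : {set 'I_P} | (#|B| == m) && (#|A :&: B| == u)]| =
     'C(#|A|, u) * 'C(P - #|A|, m - u).
Proof.
move=> um.
set X1 := [set C : {set 'I_P} | C \subset A & #|C| == u].
set X2 := [set D : {set 'I_P} | D \subset ~: A & #|D| == m - u].
have cX1 : #|X1| = 'C(#|A|,u) by rewrite cards_draws.
have cX2 : #|X2| = 'C(P - #|A|, m-u).
  rewrite cards_draws; congr 'C(_, _); apply/eqP.
  rewrite -(eqn_add2l #|A|) (cardsC A) card_ord subnKC //.
  by have := max_card A; rewrite card_ord.
rewrite -cX1 -cX2 -cardsX.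
rewrite -(@card_in_imset _ _ (fun CD => CD.1 :|: CD.2) (setX X1 X2)).
- apply: eq_card => B; rewrite inE. apply/andP/imsetP.
  + case=> /eqP hB /eqP hI. exists (A :&: B, ~:A :&: B).
    * rewrite in_setX !inE subsetIl hI eqxx /= subsetIl /=.
      have := cardsID A B; rewrite setDE setIC [B :&: ~: A]setIC => h.
      by rewrite -hB -h hI addKn.
    * by rewrite /= -setIUl setUCr setTI.
  + case=> [[C D]] /=; rewrite in_setX !inE => /andP [/andP [CA /eqP cC] /andP [DA /eqP cD]] ->.
    have dCD : C :&: D = set0.
      apply/setP=> x; rewrite !inE; apply/negbTE; apply/negP=> /andP [xC xD].
      by have := subsetP DA x xD; rewrite inE (subsetP CA x xC).
    have dAD : A :&: D = set0.
      apply/setP=> x; rewrite !inE; apply/negbTE; apply/negP=> /andP [xA xD].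
      by have := subsetP DA x xD; rewrite inE xA.
    rewrite setIUr dAD setU0 (setIidPr CA) cC eqxx; split => //.
    have := cardsUI C D; rewrite dCD cards0 addn0 cC cD => ->.
    by rewrite subnKC.
- move=> [C1 D1] [C2 D2]; rewrite !in_setX !inE /=.
  move=> /andP [/andP [CA1 _] /andP [DA1 _]] /andP [/andP [CA2 _] /andP [DA2 _]] e.
  have hC : forall C D : {set 'I_P}, C \subset A -> D \subset ~: A -> A :&: (C :|: D) = C.
    move=> C D CA DA; apply/setP=> x; rewrite !inE.
    move: (subsetP CA x) (subsetP DA x); rewrite !inE.
    by case: (x \in A); case: (x \in C); case: (x \in D) => //= h1 h2; first [by move: (h1 isT) | by move: (h2 isT)].
  have hD : forall C D : {set 'I_P}, C \subset A -> D \subset ~: A -> ~: A :&: (C :|: D) = D.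
    move=> C D CA DA; apply/setP=> x; rewrite !inE.
    move: (subsetP CA x) (subsetP DA x); rewrite !inE.
    by case: (x \in A); case: (x \in C); case: (x \in D) => //= h1 h2; first [by move: (h1 isT) | by move: (h2 isT)].
  congr pair; [rewrite -(hC _ _ CA1 DA1) e hC // | rewrite -(hD _ _ CA1 DA1) e hD //].
Qed.

Local Open Scope nat_scope.

Lemma sum_ind m n c : \sum_(m <= u < n) (c == u : nat) = ((m <= c) && (c < n)).
Proof.
elim: n => [|n IH]; first by rewrite big_geq // ltn0 andbF.
have [mn|nm] := leqP m n.
  rewrite big_nat_recr // IH ltnS leq_eqVlt.
  case: (ltngtP c n) => [h|h|->].
  - by case: (_ || _).
  - by case: (_ || _).
  - by rewrite -leq_eqVlt mn.
rewrite big_geq //; case: andP => // -[h1 h2].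
by have := leq_trans (leq_ltn_trans h1 h2) nm; rewrite ltnn.
Qed.

Lemma sum_b2n (T : finType) (p : pred T) : \sum_(x : T) (p x : nat) = #|[set x | p x]|.
Proof.
rewrite -sum1_card [RHS]big_mkcond; apply: eq_bigr => x _; rewrite inE; by case: (p x).
Qed.

Lemma overlap_eq s K P : K <= P ->
  overlap_pairs s K P = 'C(P, K) * \sum_(s <= u < K.+1) 'C(K, u) * 'C(P - K, K - u).
Proof.
move=> KP.
rewrite /overlap_pairs -sum1dep_card big_mkcond /= -(pair_bigA _ (fun A B : {set 'I_P} =>
  if [&& #|A| == K, #|B| == K & s <= #|A :&: B|] then 1 else 0)) /=.
have inner : forall A : {set 'I_P}, #|A| = K ->
   \sum_(B : {set 'I_P}) (if [&& #|A| == K, #|B| == K & s <= #|A :&: B|] then 1 else 0)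
   = \sum_(s <= u < K.+1) 'C(K, u) * 'C(P - K, K - u).
  move=> A cA.
  have -> : \sum_(B : {set 'I_P}) (if [&& #|A| == K, #|B| == K & s <= #|A :&: B|] then 1 else 0)
     = \sum_(B : {set 'I_P}) \sum_(s <= u < K.+1) ((#|B| == K) && (#|A :&: B| == u) : nat).
    apply: eq_bigr => B _; rewrite cA eqxx /=.
    case: (#|B| == K) => /=; last by rewrite big1.
    under eq_bigr do rewrite /=.
    rewrite sum_ind ltnS.
    have -> : #|A :&: B| <= K by rewrite -cA subset_leq_card // subsetIl.
    by rewrite andbT.
  rewrite exchange_big /=; apply: eq_big_nat => u /andP [_ uK].
  rewrite -cA -(card_split A (m := #|A|)) -?cA //.
    exact: (sum_b2n (fun B : {set 'I_P} => (#|B| == #|A|) && (#|A :&: B| == u))).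
  by rewrite cA -ltnS.
transitivity (\sum_(A : {set 'I_P}) ((#|A| == K) : nat) * \sum_(s <= u < K.+1) 'C(K, u) * 'C(P - K, K - u)).
  apply: eq_bigr => A _; have [cA|cA] := eqVneq #|A| K.
    rewrite mul1n -(inner A cA) cA eqxx. reflexivity.
  by rewrite mul0n big1 // => B _; rewrite /= (negbTE cA).
rewrite -big_distrl /=; congr (_ * _).
by rewrite -[in RHS](card_ord P) -card_draws -sum_b2n.
Qed.

Local Open Scope nat_scope.

Definition cc K P u := 'C(K, u) * 'C(P - K, K - u).

Lemma vander K P : K <= P -> \sum_(0 <= u < K.+1) cc K P u = 'C(P, K).
Proof.
move=> KP; rewrite big_mkord /cc.
by rewrite (Vandermonde K (P - K) K) subnKC.
Qed.

Lemma cc_ratio K P u : u < K ->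
  cc K P u.+1 * (u.+1 * (P - K - (K - u.+1))) = cc K P u * (K - u) ^ 2.
Proof.
move=> uK; rewrite /cc.
have e1 := mul_bin_left K u.
have e2 := mul_bin_left (P - K) (K - u.+1).
have h : (K - u.+1).+1 = K - u by rewrite subnSK.
rewrite h in e2.
rewrite mulnACA (mulnC 'C(K, u.+1)) (mulnC 'C(P - K, K - u.+1)) e1 -e2.
by rewrite mulnACA mulnC.
Qed.

Lemma ffact_split P K s : s <= K -> P ^_ K = P ^_ s * (P - s) ^_ (K - s).
Proof.
elim: s P K => [|s IH] P K sK; first by rewrite ffactn0 mul1n !subn0.
case: K sK => [//|k] sK.
rewrite !ffactnS (IH P.-1 k sK) mulnA; congr (_ * _).
by rewrite subSS -subn1 -subnDA add1n.
Qed.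

Lemma cs_eq s K P : s <= K -> K <= P ->
  cc K P s * P ^_ K = 'C(P, K) * 'C(K, s) * K ^_ s * (P - K) ^_ (K - s).
Proof.
move=> sK KP; rewrite /cc.
apply/eqP; rewrite -(eqn_pmul2r (fact_gt0 (K - s))); apply/eqP.
rewrite -(bin_ffact P K) -(bin_ffact (P - K) (K - s)) -(ffact_fact sK).
rewrite -!multE; match goal with |- ?a = ?b => change (@eq nat a b) end; ring.
Qed.

Local Open Scope R_scope.

Lemma INR_mul a b : INR (a * b)%N = INR a * INR b.
Proof. by rewrite -mult_INR. Qed.
Lemma INR_add a b : INR (a + b)%N = INR a + INR b.
Proof. by rewrite -plus_INR. Qed.
Lemma INR_exp a b : INR (a ^ b)%N = INR a ^ b.
Proof. elim: b => [|b IH] //=; by rewrite expnS INR_mul IH. Qed.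
Lemma INR_sub a b : (b <= a)%N -> INR (a - b)%N = INR a - INR b.
Proof. move=> /leP h; by rewrite -minus_INR. Qed.
Lemma INR_leq a b : (a <= b)%N -> INR a <= INR b.
Proof. move=> /leP; apply: le_INR. Qed.
Lemma INR_ge0 a : 0 <= INR a.
Proof. apply: pos_INR. Qed.
Lemma INR_gt0 a : (0 < a)%N -> 0 < INR a.
Proof. move=> /ltP; apply: lt_0_INR. Qed.

Lemma ff_bound N m : (m <= N)%N ->
  INR N ^ m * (INR N - INR m * (INR m - 1)) <= INR (N ^_ m) * INR N /\
  INR (N ^_ m) <= INR N ^ m.
Proof.
elim: m => [|m IH] mN.
  rewrite ffactn0 /=; split; nra.
have [IH1 IH2] := IH (ltnW mN).
rewrite ffactnSr INR_mul (INR_sub (ltnW mN)) S_INR /=.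
have x0 := INR_ge0 m. have hF := INR_ge0 (N ^_ m).
have hG : 0 <= INR N ^ m by apply: pow_le; apply: INR_ge0.
have hmN : INR m + 1 <= INR N by rewrite -S_INR; apply: INR_leq.
have he : 0 <= INR m * (INR m - 1).
  case: m {IH IH1 IH2 mN x0 hF hG hmN} => [|m]; first by rewrite /=; lra.
  rewrite S_INR; have := INR_ge0 m; nra.
split.
- have h1 : INR N ^ m * (INR N - INR m * (INR m - 1)) * (INR N - INR m)
      <= INR (N ^_ m) * INR N * (INR N - INR m) by apply: Rmult_le_compat_r; lra.
  have h2 : INR N * (INR N - INR m * (INR m - 1) - 2 * INR m) <=
      (INR N - INR m * (INR m - 1)) * (INR N - INR m) by nra.
  have h3 := Rmult_le_compat_l _ _ _ hG h2.
  nra.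
- have : INR (N ^_ m) * (INR N - INR m) <= INR N ^ m * (INR N - INR m)
    by apply: Rmult_le_compat_r; lra.
  have : INR N ^ m * (INR N - INR m) <= INR N * INR N ^ m by nra.
  lra.
Qed.

Lemma rho_bound m N1 N2 : (m <= N1)%N -> (N1 <= N2)%N ->
  INR (N2 ^_ m) * (INR N1 - INR m + 1 - INR m * (INR N2 - INR N1))
     <= INR (N1 ^_ m) * (INR N1 - INR m + 1) /\
  INR (N1 ^_ m) <= INR (N2 ^_ m).
Proof.
elim: m N1 N2 => [|m IH] N1 N2 mN1 N12.
  rewrite !ffactn0 /=; split; lra.
case: N1 mN1 N12 => [//|n1] mN1 N12.
case: N2 N12 => [//|n2] N12.
have [IH1 IH2] := IH n1 n2 mN1 N12.
rewrite !ffactSS !INR_mul !S_INR.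
have hF := INR_ge0 (n1 ^_ m). have hG := INR_ge0 (n2 ^_ m).
have hm := INR_ge0 m.
have h12 : INR n1 <= INR n2 by apply: INR_leq.
have hmn : INR m <= INR n1 by apply: INR_leq.
split; last by apply: Rmult_le_compat; try lra; apply: INR_ge0.
set d := INR n2 - INR n1.
have hd : 0 <= d by rewrite /d; lra.
have key : (INR n2 + 1) * (INR n1 + 1 - (INR m + 1) + 1 - (INR m + 1) * d) <=
           (INR n1 + 1) * (INR n1 - INR m + 1 - INR m * d).
  have e2 : INR n2 = INR n1 + d by rewrite /d; ring.
  rewrite e2; have := Rmult_le_pos _ _ hd hm; have := Rmult_le_pos _ _ hd hd; nra.
have := Rmult_le_compat_l _ _ _ hG key.
have hN1 : 0 <= INR n1 + 1 by lra.
have := Rmult_le_compat_l _ _ _ hN1 IH1.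
rewrite /d; nra.
Qed.

Local Open Scope R_scope.

Lemma geo_sum (f : nat -> nat) m n r : (m <= n)%N -> 0 <= r < 1 ->
  (forall u, (m <= u)%N -> (u < n)%N -> INR (f u.+1) <= r * INR (f u)) ->
  INR (\sum_(m <= u < n.+1) f u) <= INR (f m) / (1 - r).
Proof.
move=> mn hr hf.
have claim : forall k, ((m + k)%N <= n)%N ->
  INR (\sum_(m <= u < (m + k)%N.+1) f u) <= INR (f m) * (1 - r ^ (k.+1)) / (1 - r) /\
  INR (f (m + k)%N) <= r ^ k * INR (f m).
  elim=> [|k IH2] hk.
    rewrite addn0 big_nat1 /=; split; last lra.
    apply: Req_le; field; lra.
  have hk' : ((m + k)%N <= n)%N by apply: leq_trans hk; rewrite leq_add2l.
  have [IH1' IH2'] := IH2 hk'.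
  have hn : INR (f (m + k.+1)%N) <= r ^ k.+1 * INR (f m).
    have hk2 : ((m + k)%N < n)%N by rewrite -addnS.
    rewrite addnS; apply: Rle_trans (hf _ (leq_addr k m) hk2) _.
    rewrite /=; rewrite Rmult_assoc; apply: Rmult_le_compat_l; lra.
  split => //.
  rewrite big_nat_recr ?addnS ?leqW ?leq_addr // INR_add.
  rewrite addnS in hn.
  have : INR (f m) * (1 - r ^ k.+1) / (1 - r) + r ^ k.+1 * INR (f m) =
         INR (f m) * (1 - r ^ k.+2) / (1 - r).
    rewrite [r ^ k.+2]/= [r ^ k.+1]/=; set t := r ^ k; field; lra.
  move=> E; rewrite -E; apply: Rplus_le_compat => //.
have [c1 _] := claim (n - m)%N (eq_leq (subnKC mn)).
rewrite (subnKC mn) in c1.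
apply: Rle_trans c1 _.
have : 0 <= r ^ (n - m).+1 by apply: pow_le; lra.
have : 0 <= INR (f m) := INR_ge0 _.
move=> h1 h2; rewrite /Rdiv; apply: Rmult_le_compat_r.
  apply: Rlt_le; apply: Rinv_0_lt_compat; lra.
nra.
Qed.

Lemma const_sum (f : nat -> nat) n b :
  (forall u, (u < n)%N -> INR (f u) <= b) ->
  INR (\sum_(0 <= u < n) f u) <= INR n * b.
Proof.
elim: n => [|n IH] hf; first by rewrite big_geq //=; lra.
rewrite big_nat_recr // INR_add S_INR.
have h1 := IH (fun u hu => hf u (ltnW hu)).
have h2 := hf n (ltnSn n).
apply: Rle_trans (Rplus_le_compat _ _ _ _ h1 h2) _; lra.
Qed.

Lemma down_chain (f : nat -> nat) s M : 0 <= M ->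
  (forall u, (u < s)%N -> INR (f u) <= M * INR (f u.+1)) ->
  forall k u, (u + k)%N = s -> INR (f u) <= M ^ k * INR (f s).
Proof.
move=> hM hf; elim=> [|k IH] u e.
  by rewrite addn0 in e; rewrite e /=; lra.
have e' : (u.+1 + k)%N = s by rewrite addSn -addnS.
have hu : (u < s)%N by rewrite -e' addSn ltnS leq_addr.
apply: Rle_trans (hf u hu) _.
rewrite /= Rmult_assoc; apply: Rmult_le_compat_l => //.
exact: IH.
Qed.

Local Open Scope R_scope.

Lemma q_formula s K P : (K <= P)%N ->
  edge_prob s K P = INR (\sum_(s <= u < K.+1) cc K P u) / INR 'C(P, K).
Proof.
move=> KP; rewrite /edge_prob overlap_eq // INR_mul /cc.
have : 0 < INR 'C(P, K) by apply: INR_gt0; rewrite bin_gt0.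
move=> h; field; lra.
Qed.

Lemma a_eq s K P : (0 < P)%N ->
  approx_prob s K P = (INR K ^ 2 / INR P) ^ s / INR (s`!).
Proof.
move=> hP; rewrite /approx_prob pow_mult /Rdiv Rpow_mult_distr pow_inv.
have : 0 < INR (s`!) by apply: INR_gt0; apply: fact_gt0.
move=> h; field; split; try lra.
apply: pow_nonzero; have := INR_gt0 hP; lra.
Qed.

Lemma cs_real s K P : (s <= K)%N -> (K <= P)%N ->
  INR (cc K P s) * INR (s`!) * INR (P ^_ s) * INR ((P - s) ^_ (K - s)) =
  INR 'C(P, K) * INR (K ^_ s) ^ 2 * INR ((P - K) ^_ (K - s)).
Proof.
move=> sK KP.
have e1 := cs_eq sK KP. have e2 := ffact_split P sK. have e3 := bin_ffact K s.
rewrite e2 in e1.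
have := f_equal INR e1; have := f_equal INR e3; rewrite !INR_mul => h3 h1.
rewrite ?INR_mul.
transitivity (INR (s`!) * (INR 'C(K, s) * INR 'C(P - K, K - s) *
    (INR (P ^_ s) * INR ((P - s) ^_ (K - s))))); first by ring.
rewrite h1 -h3; ring.
Qed.

Lemma leq_of_INR a b : INR a <= INR b -> (a <= b)%N.
Proof. move=> h; apply/leP; exact: INR_le. Qed.

Lemma ratio_up K P u : (2 * K <= P)%N -> (u < K)%N ->
  INR (cc K P u.+1) * (INR P - 2 * INR K) <= INR (cc K P u) * INR K ^ 2.
Proof.
move=> h2 uK.
have e := f_equal INR (cc_ratio P uK).
rewrite INR_mul (INR_mul (cc K P u)) INR_exp (INR_mul u.+1) in e.
have hD : (P - 2 * K <= u.+1 * (P - K - (K - u.+1)))%N by nia.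
have hE : ((K - u) ^ 2 <= K ^ 2)%N by rewrite leq_exp2r // leq_subr.
have hD' := INR_leq hD; have hE' := INR_leq hE.
have i2 : INR 2 = 2 by simpl; lra.
rewrite INR_sub // (INR_mul u.+1) (INR_mul 2) i2 in hD'. rewrite !INR_exp in hE'.
have c0 := INR_ge0 (cc K P u.+1). have c1 := INR_ge0 (cc K P u).
have h3 := Rmult_le_compat_l _ _ _ c0 hD'.
have h4 := Rmult_le_compat_l _ _ _ c1 hE'.
nra.
Qed.

Lemma cs_up s K P : (1 <= s)%N -> (s <= K)%N -> (2 * K <= P)%N ->
  INR s * INR s < INR P ->
  INR (cc K P s) / INR 'C(P, K) <=
    approx_prob s K P * (INR P / (INR P - INR s * (INR s - 1))).
Proof.
move=> s1 sK h2 ss.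
have KP : (K <= P)%N by lia.
have e := cs_real sK KP.
have [Ub1 Ub2] := @rho_bound (K - s) (P - K) (P - s) ltac:(lia) ltac:(lia).
have [Xb1 Xb2] := @ff_bound K s sK.
have [Yb1 Yb2] := @ff_bound P s ltac:(lia).
have hp : 0 < INR P by apply: INR_gt0; lia.
have hk : 0 < INR K by apply: INR_gt0; lia.
have hC : 0 < INR 'C(P, K) by apply: INR_gt0; rewrite bin_gt0.
have hf : 0 < INR (s`!) by apply: INR_gt0; apply: fact_gt0.
have hV : 0 < INR ((P - s) ^_ (K - s)) by apply: INR_gt0; rewrite ffact_gt0; lia.
have hY : 0 < INR (P ^_ s) by apply: INR_gt0; rewrite ffact_gt0; lia.
have hX := INR_ge0 (K ^_ s).
have hU := INR_ge0 ((P - K) ^_ (K - s)).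
have hs1 : 0 <= INR s * (INR s - 1).
  have : 1 <= INR s by rewrite -/(INR 1); apply: INR_leq.
  nra.
set X := INR (K ^_ s) in e Xb1 Xb2 hX.
set Y := INR (P ^_ s) in e Yb1 Yb2 hY.
set U := INR ((P - K) ^_ (K - s)) in e Ub1 Ub2 hU.
set V := INR ((P - s) ^_ (K - s)) in e Ub1 Ub2 hV.
set C := INR 'C(P, K) in e hC *.
set c := INR (cc K P s).
rewrite -/c in e.
set f := INR (s`!) in e hf.
set k := INR K in Xb1 Xb2 hk *.
set p := INR P in Yb1 Yb2 hp ss *.
set es := INR s * (INR s - 1) in Xb1 Yb1 hs1 *.
have hpe : 0 < p - es by rewrite /es; have := INR_ge0 s; nra.
have hks : 0 <= k ^ s by apply: pow_le; lra.
have hps : 0 < p ^ s by apply: pow_lt.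
(* c * f * Y * V = C * X^2 * U <= C * (k^s)^2 * V *)
have h1 : c * f * Y <= C * (k ^ s) ^ 2.
  have : C * X ^ 2 * U <= C * (k ^ s) ^ 2 * V.
    apply: Rmult_le_compat; try nra.
    apply: Rmult_le_compat_l; try lra.
    apply: pow_incr; lra.
  rewrite -e => h.
  have hV' : / V > 0 by apply: Rinv_0_lt_compat.
  have := Rmult_le_compat_r _ _ _ (Rlt_le _ _ hV') h.
  rewrite !Rmult_assoc Rinv_r ?Rmult_1_r; try lra; rewrite -!Rmult_assoc; lra.
rewrite /approx_prob.
have -> : INR K ^ (2 * s) = (k ^ s) ^ 2 by rewrite -pow_mult Nat.mul_comm.
rewrite -/p -/f.
(* c / C <= (k^s)^2 / (f * Y) <= (k^s)^2 * p / (f * p^s * (p - es)) *)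
have hY' : p ^ s * (p - es) <= Y * p by [].
apply: (Rmult_le_reg_r (C * f * Y * (p - es))).
  repeat apply: Rmult_lt_0_compat => //.
have -> : c / C * (C * f * Y * (p - es)) = c * f * Y * (p - es) by field; lra.
have -> : / f * ((k ^ s) ^ 2 / p ^ s) * (p / (p - es)) * (C * f * Y * (p - es)) =
   C * (k ^ s) ^ 2 * (Y * p) / p ^ s by field; repeat split; lra.
apply: Rle_trans (Rmult_le_compat_r _ _ _ (Rlt_le _ _ hpe) h1) _.
apply: (Rmult_le_reg_r (p ^ s)) => //.
have -> : C * (k ^ s) ^ 2 * (Y * p) / p ^ s * p ^ s = C * (k ^ s) ^ 2 * (Y * p)
  by field; lra.
have hCk : 0 <= C * (k ^ s) ^ 2 by nra.
have := Rmult_le_compat_l _ _ _ hCk hY'.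
nra.
Qed.

Lemma div_ge0 a b : 0 <= a -> 0 < b -> 0 <= a / b.
Proof. move=> h1 h2; apply: Rmult_le_pos => //; apply: Rlt_le; exact: Rinv_0_lt_compat. Qed.

Lemma fin_up_arith (a p es r x sg : R) : 0 <= a -> 0 < p -> 0 <= es -> es <= sg * p ->
  0 <= sg <= 1/16 -> 0 <= x <= 1/16 -> 0 <= r <= 8/7 * x ->
  a * (p / (p - es)) / (1 - r) <= a * (1 + 4 * x + 2 * sg).
Proof.
move=> ha hp hes hsg hs hx hr.
have hpe : p * (1 - sg) <= p - es by nra.
have hpe0 : 0 < p - es by nra.
have key : 1 <= (1 - sg) * (1 - r) * (1 + 4 * x + 2 * sg).
  have : (1 - sg) * (1 - 8/7 * x) * (1 + 4 * x + 2 * sg) >= 1 by nra.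
  have : (1 - sg) * (1 - 8/7 * x) * (1 + 4 * x + 2 * sg) <=
         (1 - sg) * (1 - r) * (1 + 4 * x + 2 * sg).
    apply: Rmult_le_compat_r; first lra.
    apply: Rmult_le_compat_l; lra.
  lra.
have hr1 : 0 < 1 - r by lra.
rewrite /Rdiv Rmult_assoc; apply: Rmult_le_compat_l => //.
apply: (Rmult_le_reg_r ((p - es) * (1 - r))); first by apply: Rmult_lt_0_compat.
have -> : p * / (p - es) * / (1 - r) * ((p - es) * (1 - r)) = p by field; lra.
have : p * 1 <= p * ((1 - sg) * (1 - r) * (1 + 4 * x + 2 * sg))
  by apply: Rmult_le_compat_l; lra.
have : p * (1 - sg) * (1 - r) * (1 + 4 * x + 2 * sg) <=
       (p - es) * (1 - r) * (1 + 4 * x + 2 * sg).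
  apply: Rmult_le_compat_r; first nra.
  apply: Rmult_le_compat_r; lra.
nra.
Qed.

Lemma core_up s K P : (1 <= s)%N -> (s <= K)%N -> (K <= P)%N ->
  16 * INR K ^ 2 <= INR P -> 16 * INR s ^ 2 <= INR P ->
  edge_prob s K P <=
   approx_prob s K P * (1 + 4 * (INR K ^ 2 / INR P) + 2 * (INR s ^ 2 / INR P)).
Proof.
move=> s1 sK KP hx hs.
have hk1 : 1 <= INR K by rewrite -/(INR 1); apply: INR_leq; lia.
have hs1 : 1 <= INR s by rewrite -/(INR 1); apply: INR_leq; lia.
have hp : 0 < INR P by nra.
have h2 : (2 * K <= P)%N.
  apply: leq_of_INR; rewrite INR_mul; have -> : INR 2 = 2 by simpl; lra. nra.
have hpk : 0 < INR P - 2 * INR K by nra.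
set r := INR K ^ 2 / (INR P - 2 * INR K).
have hr0 : 0 <= r by rewrite /r; apply: div_ge0; nra.
have hr : r <= 8/7 * (INR K ^ 2 / INR P).
  rewrite /r; apply: (Rmult_le_reg_r ((INR P - 2 * INR K) * INR P)); first nra.
  have -> : INR K ^ 2 / (INR P - 2 * INR K) * ((INR P - 2 * INR K) * INR P) =
     INR K ^ 2 * INR P by field; lra.
  have -> : 8 / 7 * (INR K ^ 2 / INR P) * ((INR P - 2 * INR K) * INR P) =
     8 / 7 * INR K ^ 2 * (INR P - 2 * INR K) by field; lra.
  have h16 : 16 * INR K <= INR P by nra.
  have hk2 : 0 <= INR K ^ 2 by nra.
  have := Rmult_le_compat_l _ _ _ hk2 h16. nra.
have hx16 : INR K ^ 2 / INR P <= 1/16.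
  apply: (Rmult_le_reg_r (INR P)) => //.
  have -> : INR K ^ 2 / INR P * INR P = INR K ^ 2 by field; lra.
  lra.
have hS := @geo_sum (cc K P) s K r sK ltac:(split; lra).
have hS' : INR (\sum_(s <= u < K.+1) cc K P u) <= INR (cc K P s) / (1 - r).
  apply: hS => u su uK.
  have := ratio_up h2 uK.
  rewrite /r => h; apply: (Rmult_le_reg_r (INR P - 2 * INR K)) => //.
  have -> : INR K ^ 2 / (INR P - 2 * INR K) * INR (cc K P u) * (INR P - 2 * INR K)
     = INR (cc K P u) * INR K ^ 2 by field; lra.
  exact: h.
have hcs := cs_up s1 sK h2 ltac:(nra).
rewrite (q_formula s KP).
have hC : 0 < INR 'C(P, K) by apply: INR_gt0; rewrite bin_gt0.
have ha : 0 <= approx_prob s K P.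
  rewrite /approx_prob; apply: Rmult_le_pos.
    apply: Rlt_le; apply: Rinv_0_lt_compat; apply: INR_gt0; apply: fact_gt0.
  apply: div_ge0; first by apply: pow_le; lra.
  by apply: pow_lt.
apply: Rle_trans (_ : INR (cc K P s) / (1 - r) / INR 'C(P, K) <= _).
  rewrite /Rdiv; apply: Rmult_le_compat_r; last exact: hS'.
  by apply: Rlt_le; apply: Rinv_0_lt_compat.
have -> : INR (cc K P s) / (1 - r) / INR 'C(P, K) =
   INR (cc K P s) / INR 'C(P, K) / (1 - r) by field; split; lra.
apply: Rle_trans (_ : approx_prob s K P * (INR P / (INR P - INR s * (INR s - 1))) / (1 - r) <= _).
  rewrite /Rdiv; apply: Rmult_le_compat_r => //.
  apply: Rlt_le; apply: Rinv_0_lt_compat; lra.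
apply: fin_up_arith => //.
- nra.
- have -> : INR s ^ 2 / INR P * INR P = INR s ^ 2 by field; lra.
  nra.
- split; first by apply: div_ge0; nra.
  apply: (Rmult_le_reg_r (INR P)) => //.
  have -> : INR s ^ 2 / INR P * INR P = INR s ^ 2 by field; lra.
  lra.
- split; first by apply: div_ge0; nra.
  apply: (Rmult_le_reg_r (INR P)) => //.
  have -> : INR K ^ 2 / INR P * INR P = INR K ^ 2 by field; lra.
  lra.
Qed.

Lemma fin_lo_arith Z W e1 e3 : 0 <= Z <= 1 -> 1 - e1 <= Z -> 0 <= W <= 1 ->
  1 - e3 <= W -> 0 <= e1 -> 1 - 2 * e1 - e3 <= Z ^ 2 * W.
Proof.
move=> hZ hZ1 hW hW1 he1.
have hZ2 : 1 - 2 * e1 <= Z ^ 2.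
  case: (Rle_lt_dec 0 (1 - e1)) => h; last nra.
  have := pow_incr _ _ 2 (conj h hZ1); nra.
have : Z ^ 2 <= 1 by nra.
nra.
Qed.

Lemma core_lo s K P : (1 <= s)%N -> (s <= K)%N -> (K <= P)%N ->
  16 * INR K ^ 2 <= INR P ->
  approx_prob s K P * (1 - 2 * (INR s * (INR s - 1) / INR K) - 2 * (INR K ^ 2 / INR P))
    <= edge_prob s K P.
Proof.
move=> s1 sK KP hx.
have hk1 : 1 <= INR K by rewrite -/(INR 1); apply: INR_leq; lia.
have hs1 : 1 <= INR s by rewrite -/(INR 1); apply: INR_leq; lia.
have hp : 0 < INR P by nra.
have h2 : (2 * K <= P)%N.
  apply: leq_of_INR; rewrite INR_mul; have -> : INR 2 = 2 by simpl; lra. nra.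
have e := cs_real sK KP.
have [Ub1 Ub2] := @rho_bound (K - s) (P - K) (P - s) ltac:(lia) ltac:(lia).
have [Xb1 Xb2] := @ff_bound K s sK.
have [Yb1 Yb2] := @ff_bound P s ltac:(lia).
rewrite !INR_sub // in Ub1; try lia.
have hk : 0 < INR K by lra.
have hC : 0 < INR 'C(P, K) by apply: INR_gt0; rewrite bin_gt0.
have hf : 0 < INR (s`!) by apply: INR_gt0; apply: fact_gt0.
have hV : 0 < INR ((P - s) ^_ (K - s)) by apply: INR_gt0; rewrite ffact_gt0; lia.
have hY : 0 < INR (P ^_ s) by apply: INR_gt0; rewrite ffact_gt0; lia.
have hX := INR_ge0 (K ^_ s).
have hU := INR_ge0 ((P - K) ^_ (K - s)).
have hs0 : 0 <= INR s * (INR s - 1) by nra.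
have hSK : INR s <= INR K by apply: INR_leq.
rewrite (q_formula s KP).
have hS : INR (cc K P s) <= INR (\sum_(s <= u < K.+1) cc K P u).
  rewrite big_ltn ?ltnS // INR_add; have := INR_ge0 (\sum_(s.+1 <= u < K.+1) cc K P u); lra.
apply: Rle_trans (_ : _ <= INR (cc K P s) / INR 'C(P, K)) _; last first.
  rewrite /Rdiv; apply: Rmult_le_compat_r => //; apply: Rlt_le; exact: Rinv_0_lt_compat.
set X := INR (K ^_ s) in e Xb1 Xb2 hX.
set Y := INR (P ^_ s) in e Yb1 Yb2 hY.
set U := INR ((P - K) ^_ (K - s)) in e Ub1 Ub2 hU.
set V := INR ((P - s) ^_ (K - s)) in e Ub1 Ub2 hV.
set C := INR 'C(P, K) in e hC *.
set c := INR (cc K P s).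
rewrite -/c in e.
set f := INR (s`!) in e hf.
set k := INR K in Xb1 Xb2 hk hk1 hx hSK Ub1 *.
set p := INR P in Yb1 Yb2 hp hx Ub1 *.
set sg := INR s in hs1 hs0 hSK Ub1 *.
have hks : 0 < k ^ s by apply: pow_lt; lra.
have hps : 0 < p ^ s by apply: pow_lt.
have hcC : c / C = X ^ 2 * U / (f * Y * V).
  apply: (Rmult_eq_reg_r (C * f * Y * V)); last by apply: Rgt_not_eq; repeat apply: Rmult_lt_0_compat.
  have -> : c / C * (C * f * Y * V) = c * f * Y * V by field; lra.
  rewrite e; field; repeat split; lra.
rewrite hcC.
set Z := X / k ^ s.
set W := U / V.
have hZ : 0 <= Z <= 1.
  split; first by apply: div_ge0.
  apply: (Rmult_le_reg_r (k ^ s)) => //.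
  rewrite /Z; have -> : X / k ^ s * k ^ s = X by field; lra. lra.
have hZ1 : 1 - sg * (sg - 1) / k <= Z.
  apply: (Rmult_le_reg_r (k ^ s * k)); first nra.
  rewrite /Z; have -> : X / k ^ s * (k ^ s * k) = X * k by field; lra.
  have -> : (1 - sg * (sg - 1) / k) * (k ^ s * k) = k ^ s * (k - sg * (sg - 1)) by field; lra.
  exact: Xb1.
have hL : 7/8 * p <= p - k - (k - sg) + 1 by nra.
have hW : 0 <= W <= 1.
  split; first by apply: div_ge0.
  apply: (Rmult_le_reg_r V) => //.
  rewrite /W; have -> : U / V * V = U by field; lra. lra.
have hW1 : 1 - 8/7 * (k ^ 2 / p) <= W.
  have hm : (k - sg) * (p - sg - (p - k)) <= k ^ 2 by nra.
  apply: (Rmult_le_reg_r (V * (p - k - (k - sg) + 1))); first nra.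
  rewrite /W; have -> : U / V * (V * (p - k - (k - sg) + 1)) = U * (p - k - (k - sg) + 1)
    by field; lra.
  apply: Rle_trans Ub1.
  have : (1 - 8 / 7 * (k ^ 2 / p)) * (p - k - (k - sg) + 1) <=
         p - k - (k - sg) + 1 - (k - sg) * (p - sg - (p - k)).
    have -> : (1 - 8 / 7 * (k ^ 2 / p)) * (p - k - (k - sg) + 1) =
      p - k - (k - sg) + 1 - 8/7 * k ^ 2 * ((p - k - (k - sg) + 1) / p) by field; lra.
    have : (p - k - (k - sg) + 1) / p >= 7/8.
      apply: Rle_ge; apply: (Rmult_le_reg_r p) => //.
      have -> : (p - k - (k - sg) + 1) / p * p = p - k - (k - sg) + 1 by field; lra.
      lra.
    nra.
  move=> h; have := Rmult_le_compat_l _ _ _ (Rlt_le _ _ hV) h. nra.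
have key := fin_lo_arith hZ hZ1 hW hW1 ltac:(apply: div_ge0; lra).
have ha : approx_prob s K P = (k ^ s) ^ 2 / (f * p ^ s).
  rewrite /approx_prob.
  have -> : INR K ^ (2 * s) = (k ^ s) ^ 2 by rewrite -pow_mult Nat.mul_comm.
  rewrite -/p -/f; field; lra.
rewrite ha.
apply: Rle_trans (_ : (k ^ s) ^ 2 / (f * p ^ s) * (Z ^ 2 * W) <= _).
  apply: Rmult_le_compat_l; first by apply: div_ge0; nra.
  have : 8 / 7 * (k ^ 2 / p) <= 2 * (k ^ 2 / p) by have := div_ge0 (pow2_ge_0 k) hp; lra.
  lra.
have -> : (k ^ s) ^ 2 / (f * p ^ s) * (Z ^ 2 * W) = X ^ 2 * U / (f * p ^ s * V)
  by rewrite /Z /W; field; repeat split; lra.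
apply: (Rmult_le_reg_r (f * p ^ s * V * Y)); first by repeat apply: Rmult_lt_0_compat.
have -> : X ^ 2 * U / (f * p ^ s * V) * (f * p ^ s * V * Y) = X ^ 2 * U * Y by field; repeat split; lra.
have -> : X ^ 2 * U / (f * Y * V) * (f * p ^ s * V * Y) = X ^ 2 * U * p ^ s by field; repeat split; lra.
apply: Rmult_le_compat_l => //; nra.
Qed.

Lemma core_B s K P d : (1 <= s)%N -> (2 * s <= K)%N -> (K <= P)%N ->
  0 < d <= 1 -> d * INR P <= INR K ^ 2 ->
  / (INR s * (4 * INR s / d) ^ s + 1) <= edge_prob s K P.
Proof.
move=> s1 h2s KP hd hdP.
have sK : (s <= K)%N by lia.
have hs1 : 1 <= INR s by rewrite -/(INR 1); apply: INR_leq; lia.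
set M := 4 * INR s / d.
have hM1 : 1 <= M.
  rewrite /M; apply: (Rmult_le_reg_r d); first lra.
  have -> : 4 * INR s / d * d = 4 * INR s by field; lra. nra.
have hKs : INR K ^ 2 <= 4 * INR (K - s) ^ 2.
  rewrite INR_sub //; have : 2 * INR s <= INR K.
    have := INR_leq h2s; rewrite INR_mul; have -> : INR 2 = 2 by simpl; lra. by [].
  have := INR_ge0 s; nra.
have hP0 : 0 < INR P.
  have : 0 < INR K by have := INR_leq sK; lra.
  have := INR_leq KP; lra.
have hstep : forall u, (u < s)%N -> INR (cc K P u) <= M * INR (cc K P u.+1).
  move=> u us.
  have uK : (u < K)%N by lia.
  have e := f_equal INR (cc_ratio P uK).
  rewrite INR_mul (INR_mul (cc K P u)) INR_exp (INR_mul u.+1) in e.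
  have hD : (u.+1 * (P - K - (K - u.+1)) <= s * P)%N by apply: leq_mul; lia.
  have hE : ((K - s) ^ 2 <= (K - u) ^ 2)%N by rewrite leq_exp2r //; lia.
  have hD' := INR_leq hD; have hE' := INR_leq hE.
  rewrite INR_mul (INR_mul s) in hD'. rewrite !INR_exp in hE'.
  have c0 := INR_ge0 (cc K P u.+1). have c1 := INR_ge0 (cc K P u).
  have h3 := Rmult_le_compat_l _ _ _ c0 hD'.
  have h4 := Rmult_le_compat_l _ _ _ c1 hE'.
  have h5 : INR (cc K P u) * INR (K - s) ^ 2 <= INR (cc K P u.+1) * (INR s * INR P) by lra.
  have hKs0 : 0 < INR (K - s) ^ 2 by nra.
  apply: (Rmult_le_reg_r (INR (K - s) ^ 2)) => //.
  apply: Rle_trans h5 _.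
  rewrite /M.
  have : INR s * INR P <= 4 * INR s / d * INR (K - s) ^ 2.
    apply: (Rmult_le_reg_r d); first lra.
    have -> : 4 * INR s / d * INR (K - s) ^ 2 * d = 4 * INR s * INR (K - s) ^ 2 by field; lra.
    have := INR_ge0 s; nra.
  move=> h; have := Rmult_le_compat_l _ _ _ c0 h; nra.
have hdown := down_chain (Rle_trans _ _ _ Rle_0_1 hM1) hstep.
have hsmall : forall u, (u < s)%N -> INR (cc K P u) <= M ^ s * INR (cc K P s).
  move=> u us; apply: Rle_trans (hdown (s - u)%N u ltac:(lia)) _.
  apply: Rmult_le_compat_r; first exact: INR_ge0.
  apply: Rle_pow => //; lia.
have hsum := const_sum hsmall.
have hv := vander KP.
rewrite (big_cat_nat _ (n := s)) //= in hv; last by lia.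
have hv' := f_equal INR hv; rewrite INR_add in hv'.
rewrite (q_formula s KP).
have hS : INR (cc K P s) <= INR (\sum_(s <= u < K.+1) cc K P u).
  rewrite big_ltn ?ltnS // INR_add; have := INR_ge0 (\sum_(s.+1 <= u < K.+1) cc K P u); lra.
have hC : 0 < INR 'C(P, K) by apply: INR_gt0; rewrite bin_gt0.
set S := INR (\sum_(s <= u < K.+1) cc K P u) in hS hv' *.
set C := INR 'C(P, K) in hC hv' *.
have hMs : 0 <= M ^ s by apply: pow_le; lra.
have hden : 0 < INR s * M ^ s + 1 by have := INR_ge0 s; nra.
apply: (Rmult_le_reg_r (C * (INR s * M ^ s + 1))); first by apply: Rmult_lt_0_compat.
have -> : / (INR s * M ^ s + 1) * (C * (INR s * M ^ s + 1)) = C by field; lra.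
have -> : S / C * (C * (INR s * M ^ s + 1)) = S * (INR s * M ^ s + 1) by field; lra.
have hcs0 := INR_ge0 (cc K P s).
have : INR s * (M ^ s * INR (cc K P s)) <= INR s * M ^ s * S.
  rewrite -Rmult_assoc; apply: Rmult_le_compat_l => //; have := INR_ge0 s; nra.
move: hsum hv'. rewrite /C. move=> hsum hv' h.
have hv2 : C = INR (\sum_(0 <= u < s) cc K P u) + S.
  rewrite /C hv'. reflexivity.
lra.
Qed.

Local Open Scope R_scope.

Definition ev (Q : nat -> Prop) := exists N, forall n, (N <= n)%N -> Q n.

Lemma ev_and Q1 Q2 : ev Q1 -> ev Q2 -> ev (fun n => Q1 n /\ Q2 n).
Proof.
move=> [N1 h1] [N2 h2]; exists (maxn N1 N2) => n hn; split.
- apply: h1; apply: leq_trans hn; exact: leq_maxl.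
- apply: h2; apply: leq_trans hn; exact: leq_maxr.
Qed.

Lemma ev_imp Q1 Q2 : ev Q1 -> (forall n, Q1 n -> Q2 n) -> ev Q2.
Proof. move=> [N h] H; exists N => n hn; apply: H; exact: h. Qed.

Lemma ev_geN M : ev (fun n => (M <= n)%N).
Proof. by exists M. Qed.

Lemma ev_INR A : ev (fun n => A < INR n).
Proof.
have [N hN] := INR_unbounded A.
exists N => n hn; apply: Rlt_le_trans hN _; apply: le_INR; exact/leP.
Qed.

Lemma ev_ln A : ev (fun n => A < ln (INR n)).
Proof.
apply: (ev_imp (ev_INR (exp A))) => n h.
rewrite -[X in X < _]ln_exp; apply: ln_increasing => //; exact: exp_pos.
Qed.

Lemma exp_pow_nat t m : exp t ^ m = exp (INR m * t).
Proof.
elim: m => [|m IH]; first by rewrite /= Rmult_0_l exp_0.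
by rewrite S_INR [exp t ^ m.+1]/= IH Rmult_plus_distr_r Rmult_1_l exp_plus Rmult_comm.
Qed.

Lemma ln_le' x y : 0 < x -> x <= y -> ln x <= ln y.
Proof.
move=> hx [h|->]; last lra.
apply: Rlt_le; exact: ln_increasing.
Qed.

Lemma ln_ge0 y : 1 <= y -> 0 <= ln y.
Proof. move=> h; rewrite -ln_1; apply: ln_le'; lra. Qed.

Lemma lnpow m y : 1 <= y -> ln y ^ m.+1 <= INR m.+1 ^ m.+1 * y.
Proof.
move=> hy.
have hl := ln_ge0 hy.
have hm : 0 < INR m.+1 by apply: lt_0_INR; lia.
set t := ln y / INR m.+1.
have ht : 0 <= t by apply: Rmult_le_pos => //; apply: Rlt_le; apply: Rinv_0_lt_compat.
have e1 : ln y = INR m.+1 * t by rewrite /t; field; lra.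
have e2 : exp t ^ m.+1 = y by rewrite exp_pow_nat -e1 exp_ln //; lra.
rewrite e1 Rpow_mult_distr -e2; apply: Rmult_le_compat_l; first by apply: pow_le; lra.
apply: pow_incr; split => //; have := exp_ineq1_le t; lra.
Qed.

Lemma ev_lnpow_div m eps : 0 < eps -> ev (fun n => ln (INR n) ^ m / INR n < eps).
Proof.
move=> he.
apply: (ev_imp (ev_and (ev_ln (INR m.+1 ^ m.+1 / eps)) (ev_and (ev_ln 1) (ev_INR 1)))) => n [h1 [h2 h3]].
have hb := lnpow m (Rlt_le _ _ h3).
set l := ln (INR n) in h1 h2 hb *.
have hM : 0 < INR m.+1 ^ m.+1 by apply: pow_lt; apply: lt_0_INR; lia.
have hl0 : 0 < l by lra.
have -> : l ^ m / INR n = l ^ m.+1 / (INR n * l) by rewrite [l ^ m.+1]/=; field; lra.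
apply: (Rmult_lt_reg_r (INR n * l)); first nra.
have -> : l ^ m.+1 / (INR n * l) * (INR n * l) = l ^ m.+1 by field; lra.
apply: Rle_lt_trans hb _.
have : INR m.+1 ^ m.+1 < eps * l.
  apply: (Rmult_lt_reg_r (/ eps)); first by apply: Rinv_0_lt_compat.
  have -> : eps * l * / eps = l by field; lra. exact: h1.
nra.
Qed.

Lemma ln_small eps y : 0 < eps -> 1 <= y -> 4 / eps ^ 2 <= y -> ln y <= eps * y.
Proof.
move=> he hy hy2.
have hb := lnpow 1 hy.
have e4 : INR 2 ^ 2 = 4 by simpl; lra.
rewrite e4 in hb.
case: (Rle_lt_dec (ln y) (eps * y)) => // h.
have hl := ln_ge0 hy.
have h4 : 4 <= eps ^ 2 * y.
  apply: (Rmult_le_reg_r (/ eps ^ 2)); first by apply: Rinv_0_lt_compat; nra.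
  have -> : eps ^ 2 * y * / eps ^ 2 = y by field; lra. exact: hy2.
have h0 : 0 <= eps * y by nra.
have : (eps * y) ^ 2 < ln y ^ 2 by nra.
nra.
Qed.

Lemma ev_lnln eps : 0 < eps -> ev (fun n => ln (ln (INR n)) <= eps * ln (INR n)).
Proof.
move=> he.
apply: (ev_imp (ev_and (ev_ln 1) (ev_ln (4 / eps ^ 2)))) => n [h1 h2].
apply: ln_small => //; lra.
Qed.

Lemma ev_root (y : nat -> R) m : (1 <= m)%N -> ev (fun n => 0 <= y n) ->
  (forall eps, 0 < eps -> ev (fun n => y n ^ m < eps)) ->
  forall eps, 0 < eps -> ev (fun n => y n < eps).
Proof.
move=> hm hy H eps he.
apply: (ev_imp (ev_and hy (H (eps ^ m) (pow_lt _ _ he)))) => n [h0 h].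
case: (Rlt_le_dec (y n) eps) => // h'.
have := pow_incr _ _ m (conj (Rlt_le _ _ he) h'); lra.
Qed.

Local Open Scope R_scope.

Lemma ev_Peano N : ev (fun n => le N n).
Proof. exists N => n /leP; done. Qed.

Lemma gamma_bounds (v : nat -> R) :
  (exists gamma : nat -> R, bigO_lnln gamma /\
      forall n : nat, le 1 n -> v n = (ln (INR n) + gamma n) / INR n) ->
  ev (fun n => 1/4 <= INR n * v n /\ INR n * v n <= 2 * ln (INR n)).
Proof.
move=> [g [[C [N0 hC]] hv]].
set C' := Rabs C + 1.
have hC' : 0 < C' by rewrite /C'; have := Rabs_pos C; lra.
apply: (ev_imp (ev_and (ev_geN N0) (ev_and (ev_Peano 1) (ev_and (ev_ln 1)
   (ev_lnln (Rinv_0_lt_compat _ (Rmult_lt_0_compat 2 C' ltac:(lra) hC'))))))) =>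
   n [h0 [h1 [h2 h3]]].
have hn : 0 < INR n by apply: lt_0_INR; lia.
have e : INR n * v n = ln (INR n) + g n by rewrite hv //; field; lra.
rewrite e.
have hll : 0 <= ln (ln (INR n)) by apply: ln_ge0; lra.
have hg := hC n h0.
have hg2 : Rabs (g n) <= ln (INR n) / 2.
  apply: Rle_trans hg _.
  have : C * ln (ln (INR n)) <= C' * ln (ln (INR n)).
    apply: Rmult_le_compat_r => //; rewrite /C'; have := Rle_abs C; lra.
  have : C' * ln (ln (INR n)) <= C' * (/ (2 * C') * ln (INR n)) by apply: Rmult_le_compat_l; lra.
  have -> : C' * (/ (2 * C') * ln (INR n)) = ln (INR n) / 2 by field; lra.
  lra.
have := Rle_abs (g n); have := Rle_abs (- g n); rewrite Rabs_Ropp => ha hb.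
split; lra.
Qed.

Local Open Scope R_scope.

Lemma pow_div x y m : y <> 0 -> (x / y) ^ m = x ^ m / y ^ m.
Proof. move=> hy; by rewrite /Rdiv Rpow_mult_distr pow_inv. Qed.

Lemma KL s (K P : nat -> nat) c b : (2 <= s)%N ->
  (forall n, (s <= K n)%N /\ (K n <= P n)%N) -> 0 < c ->
  ev (fun n => c * INR n <= INR (P n)) -> 0 < b ->
  ev (fun n => b <= INR n * approx_prob s (K n) (P n)) ->
  forall eps, 0 < eps -> ev (fun n => ln (INR n) / INR (K n) < eps).
Proof.
move=> s2 hK hc hcP hb hbA.
have hkpos : forall n, 0 < INR (K n).
  move=> n; apply: INR_gt0; have := hK n; lia.
apply: (@ev_root _ (2 * s)%N); first lia.
  apply: (ev_imp (ev_ln 0)) => n h; apply: div_ge0; [lra | exact: hkpos].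
move=> eps he.
have hcs : 0 < c ^ s by apply: pow_lt.
apply: (ev_imp (ev_and (ev_and hcP hbA) (ev_and (ev_INR 1)
  (ev_lnpow_div (2 * s) (Rmult_lt_0_compat _ _ he (Rmult_lt_0_compat _ _ hb hcs)))))) =>
  n [[h1 h2] [h3 h4]].
set l := ln (INR n) in h4 *.
set k := INR (K n).
set p := INR (P n) in h1.
have hk := hkpos n.
rewrite pow_div; last by apply: Rgt_not_eq.
have hA : approx_prob s (K n) (P n) = / INR (s`!) * (k ^ (2 * s)%N / p ^ s) by [].
have hf : 1 <= INR (s`!) by rewrite -/(INR 1); apply: INR_leq; apply: fact_gt0.
have hp : 0 < p by have := Rmult_lt_0_compat _ _ hc (Rlt_trans _ _ _ Rlt_0_1 h3); lra.
have hps : 0 < p ^ s by apply: pow_lt.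
have hk2 : 0 < k ^ (2 * s)%N by apply: pow_lt.
have ek : k ^ (2 * s)%N = INR (s`!) * approx_prob s (K n) (P n) * p ^ s.
  rewrite hA; field; split; lra.
have hcp : (c * INR n) ^ s <= p ^ s by apply: pow_incr; split; [nra|lra].
rewrite Rpow_mult_distr in hcp.
have hn2 : INR n ^ 2 <= INR n ^ s by apply: Rle_pow; [lra | apply/leP; lia].
have hkb : b * c ^ s * INR n <= k ^ (2 * s)%N.
  rewrite ek.
  have ha : b / INR n <= approx_prob s (K n) (P n).
    apply: (Rmult_le_reg_l (INR n)); first lra.
    have -> : INR n * (b / INR n) = b by field; lra. lra.
  have ha0 : 0 <= approx_prob s (K n) (P n).
    apply: Rle_trans ha; apply: div_ge0; lra.
  have : b / INR n * (c ^ s * INR n ^ s) <= INR (s`!) * approx_prob s (K n) (P n) * p ^ s.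
    have := Rmult_le_compat _ _ _ _ (div_ge0 (Rlt_le _ _ hb) (Rlt_trans _ _ _ Rlt_0_1 h3))
      (Rmult_le_pos _ _ (Rlt_le _ _ hcs) (pow_le _ s (Rlt_le _ _ (Rlt_trans _ _ _ Rlt_0_1 h3)))) ha hcp.
    have : approx_prob s (K n) (P n) * p ^ s <= INR (s`!) * approx_prob s (K n) (P n) * p ^ s.
      have := Rmult_le_pos _ _ ha0 (Rlt_le _ _ hps); nra.
    lra.
  have : b * c ^ s * INR n <= b / INR n * (c ^ s * INR n ^ s).
    have -> : b / INR n * (c ^ s * INR n ^ s) = b * c ^ s * (INR n ^ s / INR n) by field; lra.
    apply: Rmult_le_compat_l; first nra.
    apply: (Rmult_le_reg_r (INR n)); first lra.
    have -> : INR n ^ s / INR n * INR n = INR n ^ s by field; lra.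
    simpl in hn2; lra.
  lra.
have hl0 : 0 <= l ^ (2 * s)%N.
  rewrite pow_mult; apply: pow_le; apply: pow2_ge_0.
apply: (@Rle_lt_trans _ (l ^ (2 * s)%N / (b * c ^ s * INR n))).
  rewrite /Rdiv.
  apply: Rmult_le_compat_l => //.
  apply: Rinv_le_contravar => //; repeat apply: Rmult_lt_0_compat => //; lra.
apply: (Rmult_lt_reg_r (b * c ^ s)); first nra.
have -> : l ^ (2 * s)%N / (b * c ^ s * INR n) * (b * c ^ s) = l ^ (2 * s)%N / INR n by field; repeat split; lra.
lra.
Qed.

Lemma ev_Un_cv (u : nat -> R) l :
  (forall eps, 0 < eps -> ev (fun n => Rabs (u n - l) < eps)) -> Un_cv u l.
Proof.
move=> H eps he; have [N hN] := H eps he.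
exists N => n hn; rewrite /R_dist; apply: hN; exact/leP.
Qed.

Lemma a_pos s K P : (1 <= K)%N -> (K <= P)%N -> 0 < approx_prob s K P.
Proof.
move=> h1 h2; rewrite /approx_prob.
apply: Rmult_lt_0_compat; first by apply: Rinv_0_lt_compat; apply: INR_gt0; apply: fact_gt0.
apply: Rmult_lt_0_compat; first by apply: pow_lt; apply: INR_gt0.
apply: Rinv_0_lt_compat; apply: pow_lt; apply: INR_gt0; lia.
Qed.

Lemma div_ge0_lt a b : 0 < a -> 0 < b -> 0 < a / b.
Proof. move=> h1 h2; apply: Rmult_lt_0_compat => //; exact: Rinv_0_lt_compat. Qed.

Lemma main_M s (K P : nat -> nat) c L b : (1 <= s)%N ->
  (forall n, (s <= K n)%N /\ (K n <= P n)%N) -> 0 < c ->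
  ev (fun n => c * INR n <= INR (P n)) -> 0 < L ->
  ev (fun n => INR n * approx_prob s (K n) (P n) <= L * ln (INR n)) -> 0 < b ->
  ev (fun n => b <= INR n * approx_prob s (K n) (P n)) ->
  asymp_eq (fun n => edge_prob s (K n) (P n)) (fun n => approx_prob s (K n) (P n)) /\
  little_o_inv_n (fun n => edge_prob s (K n) (P n) - approx_prob s (K n) (P n)).
Proof.
move=> s1 hK hc hcP hL hLA hb hbA.
have hk1 : forall n, 1 <= INR (K n) by move=> n; rewrite -/(INR 1); apply: INR_leq; have := hK n; lia.
have hpk : forall n, INR (K n) <= INR (P n) by move=> n; apply: INR_leq; have := hK n; lia.
have hs1 : 1 <= INR s by rewrite -/(INR 1); apply: INR_leq.
set x := fun n => INR (K n) ^ 2 / INR (P n).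
set sg := fun n => INR s ^ 2 / INR (P n).
set e1 := fun n => INR s * (INR s - 1) / INR (K n).
set E := fun n => 4 * x n + 2 * sg n + 2 * e1 n.
have hx0 : forall n, 0 <= x n.
  move=> n; apply: div_ge0; [apply: pow2_ge_0 | have := hk1 n; have := hpk n; lra].
have hsg0 : forall n, 0 <= sg n.
  move=> n; apply: div_ge0; [apply: pow2_ge_0 | have := hk1 n; have := hpk n; lra].
have he10 : forall n, 0 <= e1 n.
  move=> n; apply: div_ge0; [nra | have := hk1 n; lra].
have A1 : forall eps, 0 < eps -> ev (fun n => x n * ln (INR n) < eps).
  apply: (@ev_root _ s) => //.
    apply: (ev_imp (ev_ln 0)) => n h; apply: Rmult_le_pos => //; lra.
  move=> eps he.
  have hf : 0 < INR (s`!) by apply: INR_gt0; apply: fact_gt0.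
  apply: (ev_imp (ev_and (ev_ln 0) (ev_and hLA (ev_and (ev_INR 0) (ev_lnpow_div s.+1
     (Rmult_lt_0_compat _ _ he (Rinv_0_lt_compat _ (Rmult_lt_0_compat _ _ hf hL)))))))) =>
    n [h0 [h1 [h2 h3]]].
  have hP0 : (0 < P n)%N by case: (hK n) => q1 q2; lia.
  have ha := a_eq s (K n) hP0.
  rewrite Rpow_mult_distr.
  have -> : x n ^ s = INR (s`!) * approx_prob s (K n) (P n) by rewrite ha /x; field; lra.
  set l := ln (INR n) in h0 h1 h3 *.
  set a := approx_prob s (K n) (P n) in h1 *.
  have hl : 0 <= l ^ s by apply: pow_le; lra.
  have ha' : a <= L * l / INR n.
    apply: (Rmult_le_reg_l (INR n)) => //.
    have -> : INR n * (L * l / INR n) = L * l by field; lra. lra.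
  apply: (@Rle_lt_trans _ (INR s`! * (L * l / INR n) * l ^ s)).
    apply: Rmult_le_compat_r => //; apply: Rmult_le_compat_l; lra.
  have -> : INR s`! * (L * l / INR n) * l ^ s = INR s`! * L * (l ^ s.+1 / INR n)
    by rewrite [l ^ s.+1]/=; field; lra.
  apply: (Rmult_lt_reg_r (/ (INR s`! * L))); first by apply: Rinv_0_lt_compat; nra.
  have -> : INR s`! * L * (l ^ s.+1 / INR n) * / (INR s`! * L) = l ^ s.+1 / INR n
    by field; lra.
  exact: h3.
have A2 : forall eps, 0 < eps -> ev (fun n => sg n * ln (INR n) < eps).
  move=> eps he.
  have hs2 : 0 < INR s ^ 2 by nra.
  apply: (ev_imp (ev_and (ev_ln 0) (ev_and hcP (ev_and (ev_INR 0)
     (ev_lnpow_div 1 (Rmult_lt_0_compat _ _ (Rmult_lt_0_compat _ _ he hc) (Rinv_0_lt_compat _ hs2))))))) =>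
    n [h0 [h1 [h2 h3]]].
  rewrite /sg.
  set l := ln (INR n) in h0 h3 *.
  have hp : 0 < INR (P n) by nra.
  apply: (@Rle_lt_trans _ (INR s ^ 2 * l / (c * INR n))).
    rewrite /Rdiv Rmult_assoc Rmult_assoc; apply: Rmult_le_compat_l; first lra.
    rewrite Rmult_comm; apply: Rmult_le_compat_l; first lra.
    apply: Rinv_le_contravar => //; nra.
  rewrite [l ^ 1]/= Rmult_1_r in h3.
  apply: (Rmult_lt_reg_r (c / INR s ^ 2)); first by apply: div_ge0_lt.
  have -> : INR s ^ 2 * l / (c * INR n) * (c / INR s ^ 2) = l / INR n by field; lra.
  have -> : eps * (c / INR s ^ 2) = eps * c * / INR s ^ 2 by field; lra.
  exact: h3.
have A3 : forall eps, 0 < eps -> ev (fun n => e1 n * ln (INR n) < eps).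
  move=> eps he.
  have [s_1|s2] := eqVneq s 1%N.
    apply: (ev_imp (ev_geN 0)) => n _; rewrite /e1 s_1 /=; lra.
  have s2' : (2 <= s)%N by lia.
  have s2r : 2 <= INR s by have := INR_leq s2'; have -> : INR 2 = 2 by simpl; lra.
  have hss : 0 < INR s * (INR s - 1) by nra.
  have [b' hb'] : exists b', b' = b by exists b.
  apply: (ev_imp (ev_and (ev_ln 0) (KL s2' hK hc hcP hb hbA (div_ge0_lt he hss)))) => n [h0 h1].
  rewrite /e1.
  have hk := hk1 n.
  have -> : INR s * (INR s - 1) / INR (K n) * ln (INR n) =
     INR s * (INR s - 1) * (ln (INR n) / INR (K n)) by field; lra.
  apply: (Rmult_lt_reg_r (/ (INR s * (INR s - 1)))); first by apply: Rinv_0_lt_compat.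
  have -> : INR s * (INR s - 1) * (ln (INR n) / INR (K n)) * / (INR s * (INR s - 1)) =
     ln (INR n) / INR (K n) by field; repeat split; lra.
  exact: h1.
have AE : forall eps, 0 < eps -> ev (fun n => E n * ln (INR n) < eps).
  move=> eps he.
  apply: (ev_imp (ev_and (A1 (eps / 12) ltac:(lra)) (ev_and (A2 (eps / 6) ltac:(lra))
     (A3 (eps / 6) ltac:(lra))))) => n [h1 [h2 h3]].
  rewrite /E; lra.
have EV : forall eps, 0 < eps -> ev (fun n => E n < eps).
  move=> eps he.
  apply: (ev_imp (ev_and (AE eps he) (ev_ln 1))) => n [h1 h2].
  have : 0 <= E n by rewrite /E; have := hx0 n; have := hsg0 n; have := he10 n; lra.
  nra.
have BND : ev (fun n => Rabs (edge_prob s (K n) (P n) - approx_prob s (K n) (P n))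
                 <= approx_prob s (K n) (P n) * E n).
  apply: (ev_imp (EV (1/8) ltac:(lra))) => n hE.
  have hp : 0 < INR (P n) by have := hk1 n; have := hpk n; lra.
  have hxn : 16 * INR (K n) ^ 2 <= INR (P n).
    have : x n <= 1/16 by rewrite /E in hE; have := hsg0 n; have := he10 n; lra.
    rewrite /x => h; apply: (Rmult_le_reg_r (/ INR (P n))); first by apply: Rinv_0_lt_compat.
    have -> : INR (P n) * / INR (P n) = 1 by field; lra.
    rewrite /Rdiv in h; lra.
  have hsn : 16 * INR s ^ 2 <= INR (P n).
    have : sg n <= 1/16 by rewrite /E in hE; have := hx0 n; have := he10 n; lra.
    rewrite /sg => h; apply: (Rmult_le_reg_r (/ INR (P n))); first by apply: Rinv_0_lt_compat.
    have -> : INR (P n) * / INR (P n) = 1 by field; lra.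
    rewrite /Rdiv in h; lra.
  have [q1 q2] := hK n.
  have hup := core_up s1 q1 q2 hxn hsn.
  have hlo := core_lo s1 q1 q2 hxn.
  have ha := a_pos s (leq_trans s1 q1) q2.
  rewrite -/(x n) -/(sg n) in hup. rewrite -/(x n) -/(e1 n) in hlo.
  have := hx0 n; have := hsg0 n; have := he10 n.
  rewrite /E => ? ? ?.
  apply: Rabs_le; split; nra.
split.
- apply: ev_Un_cv => eps he.
  apply: (ev_imp (ev_and BND (EV eps he))) => n [h1 h2].
  have [q1 q2] := hK n.
  have ha := a_pos s (leq_trans s1 q1) q2.
  set a := approx_prob s (K n) (P n) in h1 ha *.
  set q := edge_prob s (K n) (P n) in h1 *.
  have -> : q / a - 1 = (q - a) / a by field; lra.
  rewrite /Rdiv Rabs_mult Rabs_inv (Rabs_right a); last lra.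
  rewrite -/(Rdiv _ a).
  apply: (Rmult_lt_reg_r a) => //.
  have -> : Rabs (q - a) / a * a = Rabs (q - a) by field; lra.
  nra.
- apply: ev_Un_cv => eps he.
  apply: (ev_imp (ev_and BND (ev_and hLA (ev_and (AE (eps / L) (div_ge0_lt he hL))
     (ev_INR 0))))) => n [h1 [h2 [h3 h4]]].
  have [q1 q2] := hK n.
  have ha := a_pos s (leq_trans s1 q1) q2.
  have hE0 : 0 <= E n by rewrite /E; have := hx0 n; have := hsg0 n; have := he10 n; lra.
  rewrite Rminus_0_r Rabs_right; last by apply: Rle_ge; apply: Rmult_le_pos; [lra|apply: Rabs_pos].
  apply: (@Rle_lt_trans _ (INR n * approx_prob s (K n) (P n) * E n)).
    rewrite Rmult_assoc; apply: Rmult_le_compat_l; lra.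
  apply: (@Rle_lt_trans _ (L * ln (INR n) * E n)).
    by apply: Rmult_le_compat_r.
  apply: (Rmult_lt_reg_r (/ L)); first by apply: Rinv_0_lt_compat.
  have -> : L * ln (INR n) * E n * / L = E n * ln (INR n) by field; lra.
  rewrite /Rdiv in h3; exact: h3.
Qed.

Local Open Scope R_scope.

Lemma case_b s (K P : nat -> nat) c : (1 <= s)%N ->
  (forall n, (s <= K n)%N /\ (K n <= P n)%N) -> 0 < c ->
  ev (fun n => c * INR n <= INR (P n)) ->
  ev (fun n => 1/4 <= INR n * edge_prob s (K n) (P n) /\
               INR n * edge_prob s (K n) (P n) <= 2 * ln (INR n)) ->
  ev (fun n => 1/8 <= INR n * approx_prob s (K n) (P n)) /\
  ev (fun n => INR n * approx_prob s (K n) (P n) <= 4 * ln (INR n)).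
Proof.
move=> s1 hK hc hcP hq.
have hs1 : 1 <= INR s by rewrite -/(INR 1); apply: INR_leq.
have hk1 : forall n, 1 <= INR (K n) by move=> n; rewrite -/(INR 1); apply: INR_leq; have := hK n; lia.
have hpk : forall n, INR (K n) <= INR (P n) by move=> n; apply: INR_leq; have := hK n; lia.
set M := 4 * INR s / (1/16).
have hM : 0 <= M.
  rewrite /M; have -> : 4 * INR s / (1/16) = 64 * INR s by field.
  have := INR_ge0 s; lra.
set kap := / (INR s * M ^ s + 1).
have hkap : 0 < kap.
  rewrite /kap; apply: Rinv_0_lt_compat; have := pow_le _ s hM; have := INR_ge0 s; nra.
have Q0 : ev (fun n => edge_prob s (K n) (P n) < kap).
  apply: (ev_imp (ev_and hq (ev_and (ev_INR 0) (ev_lnpow_div 1 (div_ge0_lt hkap (Rlt_0_2)))))) =>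
    n [[h1 h2] [h3 h4]].
  rewrite [_ ^ 1]/= Rmult_1_r in h4.
  apply: (Rmult_lt_reg_l (INR n)) => //.
  apply: Rle_lt_trans h2 _.
  have : ln (INR n) < kap / 2 * INR n.
    apply: (Rmult_lt_reg_r (/ INR n)); first by apply: Rinv_0_lt_compat.
    have -> : kap / 2 * INR n * / INR n = kap / 2 by field; lra. exact: h4.
  lra.
have X0 : ev (fun n => 16 * INR (K n) ^ 2 <= INR (P n)).
  apply: (ev_imp (ev_and Q0 (ev_and hcP (ev_INR (64 * INR s ^ 2 / c))))) => n [h1 [h2 h3]].
  case: (Rle_lt_dec (16 * INR (K n) ^ 2) (INR (P n))) => // hlt.
  exfalso.
  have [q1 q2] := hK n.
  have h2s : (2 * s <= K n)%N.
    apply: leq_of_INR; rewrite INR_mul; have -> : INR 2 = 2 by simpl; lra.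
    have : 64 * INR s ^ 2 < c * INR n.
      apply: (Rmult_lt_reg_r (/ c)); first by apply: Rinv_0_lt_compat.
      have -> : c * INR n * / c = INR n by field; lra.
      rewrite /Rdiv in h3; lra.
    move=> h; have hKK : (2 * INR s) ^ 2 < INR (K n) ^ 2 by nra.
    have := hk1 n; have := INR_ge0 s; nra.
  have := core_B s1 h2s q2 (conj (ltac:(lra) : 0 < 1/16) (ltac:(lra) : 1/16 <= 1))
    ltac:(lra).
  rewrite -/M -/kap; lra.
have S0 : ev (fun n => 16 * INR s ^ 2 <= INR (P n)).
  apply: (ev_imp (ev_and hcP (ev_INR (16 * INR s ^ 2 / c)))) => n [h1 h2].
  have : 16 * INR s ^ 2 < c * INR n.
    apply: (Rmult_lt_reg_r (/ c)); first by apply: Rinv_0_lt_compat.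
    have -> : c * INR n * / c = INR n by field; lra.
    rewrite /Rdiv in h2; lra.
  lra.
(* a >= q / 2 *)
have LOW : ev (fun n => 1/8 <= INR n * approx_prob s (K n) (P n)).
  apply: (ev_imp (ev_and hq (ev_and X0 (ev_and S0 (ev_INR 0))))) => n [[h1 h2] [h3 [h4 h5]]].
  have [q1 q2] := hK n.
  have hup := core_up s1 q1 q2 h3 h4.
  have hp : 0 < INR (P n) by have := hk1 n; have := hpk n; lra.
  have hx : INR (K n) ^ 2 / INR (P n) <= 1/16.
    apply: (Rmult_le_reg_r (INR (P n))) => //.
    have -> : INR (K n) ^ 2 / INR (P n) * INR (P n) = INR (K n) ^ 2 by field; lra. lra.
  have hsg : INR s ^ 2 / INR (P n) <= 1/16.
    apply: (Rmult_le_reg_r (INR (P n))) => //.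
    have -> : INR s ^ 2 / INR (P n) * INR (P n) = INR s ^ 2 by field; lra. lra.
  have ha := a_pos s (leq_trans s1 q1) q2.
  have : edge_prob s (K n) (P n) <= 2 * approx_prob s (K n) (P n) by nra.
  nra.
split => //.
have E0 : ev (fun n => INR s * (INR s - 1) / INR (K n) <= 1/8).
  have [s_1|s2] := eqVneq s 1%N.
    apply: (ev_imp (ev_geN 0)) => n _; rewrite s_1 /=.
    have -> : (1 * (1 - 1) / INR (K n)) = 0 by field; have := hk1 n; lra.
    lra.
  have s2' : (2 <= s)%N by lia.
  have s2r : 2 <= INR s by have := INR_leq s2'; have -> : INR 2 = 2 by simpl; lra.
  have hss : 0 < INR s * (INR s - 1) by nra.
  have hKL := KL s2' hK hc hcP (ltac:(lra) : 0 < 1/8) LOW (div_ge0_lt (ltac:(lra) : 0 < 1/8) hss).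
  apply: (ev_imp (ev_and hKL (ev_ln 1))) => n [h1 h2].
  have hk := hk1 n.
  have : 1 / INR (K n) <= ln (INR n) / INR (K n).
    rewrite /Rdiv; apply: Rmult_le_compat_r; [apply: Rlt_le; apply: Rinv_0_lt_compat|]; lra.
  move=> h.
  have : 1 / INR (K n) < 1 / 8 / (INR s * (INR s - 1)) by lra.
  move=> h'.
  apply: (Rmult_le_reg_r (/ (INR s * (INR s - 1)))); first by apply: Rinv_0_lt_compat.
  have -> : INR s * (INR s - 1) / INR (K n) * / (INR s * (INR s - 1)) = 1 / INR (K n)
    by field; repeat split; lra.
  rewrite /Rdiv in h' *; lra.
apply: (ev_imp (ev_and hq (ev_and X0 E0))) => n [[h1 h2] [h3 h4]].
have [q1 q2] := hK n.
have hlo := core_lo s1 q1 q2 h3.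
have hp : 0 < INR (P n) by have := hk1 n; have := hpk n; lra.
have hx : INR (K n) ^ 2 / INR (P n) <= 1/16.
  apply: (Rmult_le_reg_r (INR (P n))) => //.
  have -> : INR (K n) ^ 2 / INR (P n) * INR (P n) = INR (K n) ^ 2 by field; lra. lra.
have ha := a_pos s (leq_trans s1 q1) q2.
have : approx_prob s (K n) (P n) <= 2 * edge_prob s (K n) (P n) by nra.
have hn : 0 <= INR n := pos_INR n.
nra.
Qed.

Theorem lemma8 (s : nat) (K P : nat -> nat)
  (hs : le 1 s)
  (hK : forall n, le s (K n) /\ le (K n) (P n))
  (hP : bigOmega_n P) :
  ((exists gamma : nat -> R, bigO_lnln gamma /\
      forall n : nat, le 1 n ->
        approx_prob s (K n) (P n) = (ln (INR n) + gamma n) / INR n) ->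
    asymp_eq (fun n => edge_prob s (K n) (P n)) (fun n => approx_prob s (K n) (P n)) /\
    little_o_inv_n (fun n => edge_prob s (K n) (P n) - approx_prob s (K n) (P n)))
  /\
  ((exists gamma : nat -> R, bigO_lnln gamma /\
      forall n : nat, le 1 n ->
        edge_prob s (K n) (P n) = (ln (INR n) + gamma n) / INR n) ->
    asymp_eq (fun n => edge_prob s (K n) (P n)) (fun n => approx_prob s (K n) (P n)) /\
    little_o_inv_n (fun n => edge_prob s (K n) (P n) - approx_prob s (K n) (P n))).
Proof.
have s1 : (1 <= s)%N by apply/leP.
have hK' : forall n, (s <= K n)%N /\ (K n <= P n)%N.
  by move=> n; have [h1 h2] := hK n; split; apply/leP.
have [c [hc hcP]] := hP.
split.
- move=> /gamma_bounds hg.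
  apply: (main_M s1 hK' hc hcP (ltac:(lra) : 0 < 2) _ (ltac:(lra) : 0 < 1/4)).
  + by apply: (ev_imp hg) => n [].
  + by apply: (ev_imp hg) => n [].
- move=> /gamma_bounds hg.
  have [hb hL] := case_b s1 hK' hc hcP hg.
  exact: (main_M s1 hK' hc hcP (ltac:(lra) : 0 < 4) hL (ltac:(lra) : 0 < 1/8) hb).
Qed.
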